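(* There exist a rational polyhedron $P=\{x\in\mathbb{R}^n: Ax\le b,\ 0\le x_i\le u_i \text{ for } i\in I\}$, with $I=\{1,\dots,l\}$ the index set of integer variables, and a binarization scheme $\mathcal{B}=(B^1,\dots,B^l)$ in which every $B^i$ is a non-affine binarization polytope, such that \[\mathrm{SC}(P,I)\subsetneq\operatorname{proj}_x\big(\mathrm{SC}(P_{\mathcal{B}},I')\big),\qquad\text{where } I'=I_{\mathcal{B}}\setminus I.\]
   Context: Binarization polytopes: for positive integers $q,u$, $\Gamma^q_u$ is the set of rational polytopes $B\subseteq\{(x,z)\in\mathbb{R}\times[0,1]^q:0\le x\le u\}$ with $\operatorname{proj}_x(B\cap(\mathbb{R}\times\{0,1\}^q))=\{0,1,\dots,u\}$. $B\in\Gamma^q_u$ is affine if there are $\alpha\in\mathbb{R}^q$, $\alpha_0\in\mathbb{R}$ with $x=\alpha^Tz+\alpha_0$ for all $(x,z)\in B$. A binarization scheme is $\mathcal{B}=(B^1,\dots,B^l)$ with $B^i\in\Gamma^{q_i}_{u_i}$; with $q=\sum_iq_i$, $P_{\mathcal{B}}=\{(x,z)\in\mathbb{R}^n\times\mathbb{R}^q: x\in P,\ (x_i,z_i)\in B^i\text{ for } i\in I\}$ where $z=(z_1,\dots,z_l)$, $z_i\in\mathbb{R}^{q_i}$, and $I_{\mathcal{B}}=\{1,\dots,l,n+1,\dots,n+q\}$; thus $I'=\{n+1,\dots,n+q\}$ indexes only the new variables. Split closure: for $J\subseteq\{1,\dots,N\}$ and $X\subseteq\mathbb{R}^N$, $\mathrm{SC}(X,J)=\bigcap\mathrm{conv}(X\setminus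 S)$ over all $S=\{y:\pi_0<\pi^Ty<\pi_0+1\}$ with $\pi\in\mathbb{Z}^N$, $\pi_j=0$ for $j\notin J$, $\pi_0\in\mathbb{Z}$. $\operatorname{proj}_x$ is orthogonal projection onto the $x$-coordinates. *)

(* Defs.v *)
From HB Require Import structures.
From mathcomp Require Import all_boot all_order all_algebra.
From mathcomp Require Import Rstruct.
From Stdlib Require Rdefinitions.
Set Implicit Arguments. Unset Strict Implicit. Unset Printing Implicit Defensive.
Import Order.TTheory GRing.Theory Num.Theory.
Local Open Scope ring_scope.

Notation R := Rdefinitions.R.
Notation pt T := (T -> R).

Definition conv (T : finType) (X : pt T -> Prop) : pt T -> Prop :=
  fun y => exists (k : nat) (p : 'I_k -> pt T) (lam : 'I_k -> R),
    (forall s, X (p s)) /\ (forall s, 0 <= lam s) /\ (\sum_(s < k) lam s = 1) /\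
    (forall t, y t = \sum_(s < k) lam s * p s t).

Definition split_set (T : finType) (pi : T -> int) (pi0 : int) : pt T -> Prop :=
  fun y => (pi0%:~R < \sum_t (pi t)%:~R * y t) /\ (\sum_t (pi t)%:~R * y t < pi0%:~R + 1).

Definition SC (T : finType) (X : pt T -> Prop) (J : pred T) : pt T -> Prop :=
  fun y => forall (pi : T -> int) (pi0 : int), (forall j, ~~ J j -> pi j = 0) ->
    conv (fun w => X w /\ ~ split_set pi pi0 w) y.

Definition rat_polyhedron (T : finType) (X : pt T -> Prop) : Prop :=
  exists (m : nat) (C : 'I_m -> T -> rat) (d : 'I_m -> rat),
    forall y, X y <-> (forall r, \sum_t ratr (C r t) * y t <= ratr (d r)).

Definition bounded (T : finType) (X : pt T -> Prop) : Prop :=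
  exists M : R, forall y, X y -> forall t, `|y t| <= M.

Definition rat_polytope (T : finType) (X : pt T -> Prop) : Prop :=
  rat_polyhedron X /\ bounded X.

(* Binarization polytopes Gamma^q_u: points (x, z) in R x R^q are encoded as
   functions option 'I_q -> R, with None the x-coordinate and Some j the z_j. *)
Definition binarization_polytope (q u : nat) (B : pt (option 'I_q) -> Prop) : Prop :=
  rat_polytope B /\
  (forall y, B y -> (0 <= y None <= u%:R) /\ (forall j, 0 <= y (Some j) <= 1)) /\
  (forall x : R,
     (exists y, B y /\ (forall j, y (Some j) = 0 \/ y (Some j) = 1) /\ y None = x)
     <-> (exists k : nat, (k <= u)%N /\ x = k%:R)).

Definition affine_binpoly (q : nat) (B : pt (option 'I_q) -> Prop) : Prop :=
  exists (alpha : 'I_q -> R) (alpha0 : R),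
    forall y, B y -> y None = \sum_j alpha j * y (Some j) + alpha0.

(* The rational polyhedron P = {x in R^n : A x <= b, 0 <= x_i <= u_i, i in I},
   I = {0,..,l-1} (0-based), given l <= n. *)
Definition polyhedronP (n l m : nat) (hl : (l <= n)%N) (A : 'I_m -> 'I_n -> rat)
  (b : 'I_m -> rat) (u : 'I_l -> nat) : pt 'I_n -> Prop :=
  fun x => (forall r, \sum_j ratr (A r j) * x j <= ratr (b r)) /\
           (forall i : 'I_l, 0 <= x (widen_ord hl i) <= (u i)%:R).

(* Index type of the extended space R^n x R^q, q = sum_i q_i:
   inl j is x_j, inr (Tagged i k) is the k-th component of z_i. *)
Definition extidx (n l : nat) (q : 'I_l -> nat) : finType :=
  ('I_n + {i : 'I_l & 'I_(q i)})%type.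

Definition binPB (n l : nat) (hl : (l <= n)%N) (P : pt 'I_n -> Prop)
  (q : 'I_l -> nat) (B : forall i : 'I_l, pt (option 'I_(q i)) -> Prop)
  : pt (extidx n q) -> Prop :=
  fun y => P (fun j => y (inl j)) /\
    forall i : 'I_l,
      B i (fun o => match o with
                    | None => y (inl (widen_ord hl i))
                    | Some k => y (inr (Tagged (fun i => 'I_(q i)) k))
                    end).

Definition newidx (n l : nat) (q : 'I_l -> nat) : pred (extidx n q) :=
  fun t => match t with inl _ => false | inr _ => true end.

Definition proj_x (n l : nat) (q : 'I_l -> nat) (S : pt (extidx n q) -> Prop)
  : pt 'I_n -> Prop :=
  fun x => exists y, S y /\ forall j, y (inl j) = x j.

(* Main.v *)
Require Import Defs.
From HB Require Import structures.
From mathcomp Require Import all_boot all_order all_algebra.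
From mathcomp Require Import Rstruct.
From mathcomp Require Import lra zify.
From Stdlib Require Import Lia.
Set Implicit Arguments. Unset Strict Implicit. Unset Printing Implicit Defensive.
Import Order.TTheory GRing.Theory Num.Theory.
Local Open Scope ring_scope.

Definition qq : 'I_1 -> nat := fun _ => 2%N.
Definition ET := extidx 1 qq.
Definition zk (k : 'I_2) : ET := inr (@Tagged 'I_1 ord0 (fun i => 'I_(qq i)) k).

Lemma sumET (f : ET -> R) : (forall j, f (inl j) = 0) ->
  \sum_t f t = f (zk ord0) + f (zk ord_max).
Proof.
move=> h0; rewrite /ET /extidx big_sumType /= big1 // add0r.
rewrite (eq_bigr (fun p => (fun i (k : 'I_(qq i)) => f (inr (Tagged (fun i => 'I_(qq i)) k))) (tag p) (tagged p))); last by case.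
have E := @sig_big_dep R 0 +%R 'I_1 (fun i => 'I_(qq i)) xpredT (fun _ => xpredT) (fun i k => f (inr (Tagged (fun i => 'I_(qq i)) k))).
rewrite /= in E; rewrite -E big_ord1.
rewrite big_ord_recl big_ord1.
by have -> : lift ord0 ord0 = ord_max :> 'I_2 by apply: val_inj.
Qed.

Lemma nonsplit (T : finType) (pi : T -> int) pi0 (w : pt T) (e : int) :
  \sum_t (pi t)%:~R * w t = e%:~R -> ~ split_set pi pi0 w.
Proof.
rewrite /split_set => ->; case=> h1 h2.
rewrite ltr_int in h1.
have : e%:~R < (pi0 + 1)%:~R :> R by rewrite rmorphD /=.
rewrite ltr_int; lia.
Qed.

Lemma ratr_half : ratr (2^-1 : rat) = 2^-1 :> R.
Proof. by rewrite fmorphV /= ratr_nat. Qed.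

Lemma sum_opt2 (f : option 'I_2 -> R) : \sum_t f t = f None + f (Some ord0) + f (Some ord_max).
Proof.
rewrite (bigD1 None) //= (bigD1 (Some ord0)) //= (bigD1 (Some ord_max)) //= big_pred0.
  by rewrite addr0 !addrA.
by case=> [[[|[|k]] Hk]|] //=.
Qed.

Definition Ct (r : 'I_4) (t : option 'I_2) : rat :=
  let s := match t with None => 0%N | Some k => (val k).+1 end in
  if val r == 0%N then 1 else if s == (3 - val r)%N then 1 else -1.
Definition dt (r : 'I_4) : rat := if val r == 0%N then 2%:R else 0.
Definition Btet : pt (option 'I_2) -> Prop :=
  fun w => forall r : 'I_4, \sum_t ratr (Ct r t) * w t <= ratr (dt r).

Lemma Bchar w : Btet w <->
  [/\ w None + w (Some ord0) + w (Some ord_max) <= 2,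
      0 <= w None + w (Some ord0) - w (Some ord_max),
      0 <= w None - w (Some ord0) + w (Some ord_max) &
      0 <= - w None + w (Some ord0) + w (Some ord_max)].
Proof.
split.
  move=> H.
  have := H (@Ordinal 4 0 isT); have := H (@Ordinal 4 1 isT).
  have := H (@Ordinal 4 2 isT); have := H (@Ordinal 4 3 isT).
  rewrite /Ct /dt !sum_opt2 /= ?rmorph1 ?rmorphN1 ?rmorph0 ?ratr_nat.
  move=> h3 h2 h1 h0; split; lra.
case=> h0 h1 h2 h3; case=> [[|[|[|[|r]]]] Hr] //;
  rewrite /Ct /dt !sum_opt2 /= ?rmorph1 ?rmorphN1 ?rmorph0 ?ratr_nat; lra.
Qed.

Lemma Bbounds w : Btet w -> forall t, 0 <= w t <= 1.
Proof. move/Bchar=> [h0 h1 h2 h3]; case=> [[[|[|k]] Hk]|] //=.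
- have -> : Ordinal Hk = ord0 by apply: val_inj. lra.
- have -> : Ordinal Hk = ord_max by apply: val_inj. lra.
- lra.
Qed.

Definition mkB (x z1 z2 : R) : pt (option 'I_2) :=
  fun o => match o with None => x | Some k => if val k == 0%N then z1 else z2 end.

Lemma Bbin : binarization_polytope 1 Btet.
Proof.
split; [split|split].
- by exists 4%N, Ct, dt.
- exists 1 => y /Bbounds H t; have := H t; rewrite ler_norml; lra.
- by move=> y /Bbounds H; split; [have := H None | move=> j; have := H (Some j)].
move=> x; split.
  case=> y [/Bchar [h0 h1 h2 h3] [hb hx]].
  case: (hb ord0) => e0; case: (hb ord_max) => e1; rewrite e0 e1 hx in h0 h1 h2 h3.
  + by exists 0%N; split => //; lra.
  + by exists 1%N; split => //; lra.
  + by exists 1%N; split => //; lra.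
  + by exists 0%N; split => //; lra.
case=> [[|[|k]]] [//= _ ->].
  exists (mkB 0 0 0); split; first by apply/Bchar; rewrite /=; split; lra.
  by split => // j; rewrite /mkB; case: ifP; left.
exists (mkB 1 1 0); split; first by apply/Bchar; rewrite /=; split; lra.
split => // j; rewrite /mkB; case: ifP; [right|left] => //.
Qed.

Lemma Bnonaff : ~ affine_binpoly Btet.
Proof.
case=> al [al0 H].
have e1 := H (mkB 0 0 0); have e2 := H (mkB 1 1 0).
have e3 := H (mkB 1 0 1); have e4 := H (mkB 0 1 1).
move: e1 e2 e3 e4; rewrite !big_ord_recl !big_ord0 /=.
have hm : forall a b c, Btet (mkB a b c) <-> [/\ a + b + c <= 2, 0 <= a + b - c, 0 <= a - b + c & 0 <= - a + b + c].
  by move=> a b c; rewrite Bchar.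
rewrite !hm.
move=> e1 e2 e3 e4.
have {e1}e1 := e1 ltac:(split; lra).
have {e2}e2 := e2 ltac:(split; lra).
have {e3}e3 := e3 ltac:(split; lra).
have {e4}e4 := e4 ltac:(split; lra).
lra.
Qed.

Definition hl1 : (1 <= 1)%N := isT.
Definition A1 : 'I_1 -> 'I_1 -> rat := fun _ _ => 1.
Definition b1 : 'I_1 -> rat := fun _ => 2^-1.
Definition u1 : 'I_1 -> nat := fun _ => 1%N.
Definition BB : forall i : 'I_1, pt (option 'I_(qq i)) -> Prop := fun _ => Btet.
Definition P1 := polyhedronP hl1 A1 b1 u1.

Lemma P1char (x : pt 'I_1) : P1 x <-> 0 <= x ord0 <= 2^-1.
Proof.
rewrite /P1 /polyhedronP /A1 /b1 /u1; split.
  case=> /(_ ord0) h1 /(_ ord0) h2; rewrite big_ord1 rmorph1 ratr_half in h1.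
  have e : widen_ord hl1 ord0 = ord0 by apply: val_inj.
  rewrite e in h2; case/andP: h2 => h2 h3; apply/andP; split; lra.
move=> /andP[h1 h2]; split.
  by move=> r; rewrite big_ord1 rmorph1 ratr_half mul1r.
move=> i; have -> : widen_ord hl1 i = ord0 by apply: val_inj; rewrite /= (ord1 i).
rewrite h1 /=; lra.
Qed.

Lemma conv1 (T : finType) (X : pt T -> Prop) y : X y -> conv X y.
Proof.
move=> h; exists 1%N, (fun _ => y), (fun _ => 1); split => //; split => //; split.
  by rewrite big_ord1.
by move=> t; rewrite big_ord1 mul1r.
Qed.

Lemma conv2 (T : finType) (X : pt T -> Prop) y p1 p2 : X p1 -> X p2 ->
  (forall t, y t = 2^-1 * p1 t + 2^-1 * p2 t) -> conv X y.
Proof.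
move=> h1 h2 hy; exists 2%N, (fun s => if val s == 0%N then p1 else p2), (fun _ => 2^-1).
split; first by move=> s; case: ifP.
split; first by move=> s; lra.
split; first by rewrite big_ord_recl big_ord1; lra.
by move=> t; rewrite big_ord_recl big_ord1 /= hy.
Qed.

Lemma SCP1 x : SC P1 [pred j : 'I_1 | (j < 1)%N] x -> forall j, x j = 0.
Proof.
move=> /(_ (fun _ => 1) 0) []; first by move=> j; rewrite /= ltn_ord.
move=> k [p [lam [hp [hl [hs hx]]]]] j.
rewrite (ord1 j) hx big1 // => s _.
have [/P1char hP hS] := hp s.
suff -> : p s ord0 = 0 by rewrite mulr0.
move: hS; rewrite /split_set big_ord1 mulr0z mulr1z mul1r add0r.
lra.
Qed.

Lemma parity (a : int) : exists c, a = c * 2 \/ a = c * 2 + 1.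
Proof.
exists (a %/ 2)%Z; have := divz_eq a 2; have := modz_ge0 a (isT : (2:int) != 0).
have := ltz_pmod a (isT : (0 < 2 :> int)); lia.
Qed.

Lemma test (a c b : int) : a = c * 2 -> a%:~R * 2^-1 + b%:~R * 0 = c%:~R :> R.
Proof. move=> ->; rewrite rmorphM /=. lra. Qed.

Definition mkE (x z1 z2 : R) : pt ET :=
  fun t => match t with inl _ => x | inr p => if val (tagged p) == 0%N then z1 else z2 end.

Lemma PBmem x z1 z2 : 0 <= x <= 2^-1 -> Btet (mkB x z1 z2) ->
  binPB hl1 P1 BB (mkE x z1 z2).
Proof.
move=> hx /Bchar hB; split; first by apply/P1char.
by move=> i; apply/Bchar.
Qed.

Lemma LmkE (pi : ET -> int) x z1 z2 : (forall j, pi (inl j) = 0) ->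
  \sum_t (pi t)%:~R * mkE x z1 z2 t =
  (pi (zk ord0))%:~R * z1 + (pi (zk ord_max))%:~R * z2.
Proof.
by move=> hpi; rewrite sumET // => j; rewrite hpi mulr0z mul0r.
Qed.

Theorem proposition1 :
  exists (n l m : nat) (hl : (l <= n)%N) (A : 'I_m -> 'I_n -> rat) (b : 'I_m -> rat)
         (u : 'I_l -> nat) (q : 'I_l -> nat)
         (B : forall i : 'I_l, pt (option 'I_(q i)) -> Prop),
    (forall i, (0 < u i)%N /\ (0 < q i)%N) /\
    (forall i, binarization_polytope (u i) (B i) /\ ~ affine_binpoly (B i)) /\
    let P := polyhedronP hl A b u in
    let I := [pred j : 'I_n | (j < l)%N] in
    (forall x, SC P I x -> proj_x (SC (binPB hl P B) (@newidx n l q)) x) /\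
    (exists x, proj_x (SC (binPB hl P B) (@newidx n l q)) x /\ ~ SC P I x).
Proof.
exists 1%N, 1%N, 1%N, hl1, A1, b1, u1, qq, BB.
split; first by [].
split; first by move=> i; split; [exact: Bbin | exact: Bnonaff].
move=> P I; split.
  move=> x /SCP1 hx0; exists (mkE 0 0 0); split; last by move=> j; rewrite hx0.
  move=> pi pi0 hpi; have hpi' : forall j, pi (inl j) = 0 by move=> j; exact: hpi.
  apply: conv1; split.
    by apply: PBmem; [rewrite /=; apply/andP; split; lra | apply/Bchar; rewrite /=; split; lra].
  by apply: (nonsplit (e := 0)); rewrite LmkE // !mulr0 addr0.
exists (fun _ => 2^-1); split; last first.
  by move/SCP1 => /(_ ord0) h; lra.
exists (mkE 2^-1 2^-1 2^-1); split; last by [].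
move=> pi pi0 hpi; have hpi' : forall j, pi (inl j) = 0 by move=> j; exact: hpi.
have hhalf : (0 <= (2^-1 : R) <= 2^-1) by apply/andP; split; lra.
have [c [ha|ha]] := parity (pi (zk ord0)).
  apply: (conv2 (p1 := mkE 2^-1 2^-1 0) (p2 := mkE 2^-1 2^-1 1)).
  - split; first by apply: PBmem => //; apply/Bchar; rewrite /=; split; lra.
    by apply: (nonsplit (e := c)); rewrite LmkE // ha rmorphM /=; lra.
  - split; first by apply: PBmem => //; apply/Bchar; rewrite /=; split; lra.
    by apply: (nonsplit (e := c + pi (zk ord_max))); rewrite LmkE // ha rmorphD rmorphM /=; lra.
  - by case=> [j|p] /=; [|case: ifP]; lra.
have [d [hb|hb]] := parity (pi (zk ord_max)).
  apply: (conv2 (p1 := mkE 2^-1 0 2^-1) (p2 := mkE 2^-1 1 2^-1)).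
  - split; first by apply: PBmem => //; apply/Bchar; rewrite /=; split; lra.
    by apply: (nonsplit (e := d)); rewrite LmkE // hb rmorphM /=; lra.
  - split; first by apply: PBmem => //; apply/Bchar; rewrite /=; split; lra.
    by apply: (nonsplit (e := pi (zk ord0) + d)); rewrite LmkE // hb rmorphD rmorphM /=; lra.
  - by case=> [j|p] /=; [|case: ifP]; lra.
apply: conv1; split.
  by apply: PBmem => //; apply/Bchar; rewrite /=; split; lra.
apply: (nonsplit (e := c + d + 1)); rewrite LmkE // ha hb !rmorphD !rmorphM /=; lra.
Qed.
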